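(* Let $d\ge2$ and let $\rho$ be a diagonal symmetric state on $\mathbb{C}^d\otimes\mathbb{C}^d$ that is PPT, with associated matrix $M=M(\rho)$. Let $\mathbf{x}\in\mathbb{R}^d$ with $x_i>0$ for all $i$, let $\|\mathbf{x}\|_1=\sum_i x_i$, let $\ket{u_{\mathbf{x}}}=\mathbf{x}/\|\mathbf{x}\|_1$, and let $M^{+}$ denote the Moore–Penrose pseudo-inverse of $M$. Suppose there exists $\lambda\in[0,1)$ such that (1) $\lambda\le M_{ij}\|\mathbf{x}\|_1^2/(x_ix_j)$ for all $i,j$; (2) $\ket{u_{\mathbf{x}}}$ lies in the range of $M$ and $\lambda\le 1/\bra{u_{\mathbf{x}}}M^{+}\ket{u_{\mathbf{x}}}$; (3) $\lambda x_i(\|\mathbf{x}\|_1-2x_i)\ge\|\mathbf{x}\|_1^2\left[\sum_{j\ne i}M_{ij}-M_{ii}\right]$ for all $i$. Then $\rho$ is separable; equivalently, $M(\rho)$ is completely positive.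
   Context: Let $\{\ket{0},\dots,\ket{d-1}\}$ be the computational basis of $\mathbb{C}^d$. Define $\ket{D_{ii}}=\ket{ii}$ and, for $i<j$, $\ket{D_{ij}}=(\ket{ij}+\ket{ji})/\sqrt{2}$. A state $\rho$ on $\mathbb{C}^d\otimes\mathbb{C}^d$ is diagonal symmetric (DS) if $\rho=\sum_{0\le i\le j<d}p_{ij}\ket{D_{ij}}\bra{D_{ij}}$ with $p_{ij}\ge 0$ and $\sum_{i\le j}p_{ij}=1$; set $p_{ji}=p_{ij}$. Its associated matrix $M(\rho)$ is the real symmetric $d\times d$ matrix with $M(\rho)_{ii}=p_{ii}$ and $M(\rho)_{ij}=p_{ij}/2$ for $i\ne j$. $\rho$ is PPT if its partial transpose with respect to the computational basis of the second factor is positive semidefinite. A state is separable if it is a convex combination of product states $\rho^A\otimes\rho^B$. A real $d\times d$ matrix $A$ is completely positive if $A=BB^T$ for some real $d\times k$ matrix $B$ with non-negative entries. *)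

(* Defs.v *)
From HB Require Import structures.
From mathcomp Require Import all_boot all_order all_algebra.
From mathcomp Require Import reals.
From mathcomp Require Import complex mxtens.
Set Implicit Arguments. Unset Strict Implicit. Unset Printing Implicit Defensive.
Import Order.TTheory GRing.Theory Num.Theory.
Local Open Scope ring_scope.

Section QuantumDefs.
Variable R : realType.
Local Notation C := (R[i]).

Definition toC (r : R) : C := Complex r 0.

Definition adjmx m n (A : 'M[C]_(m, n)) : 'M[C]_(n, m) :=
  \matrix_(i, j) conjc (A j i).

Definition psdmx n (A : 'M[C]_n) : Prop :=
  A = adjmx A /\ forall v : 'cV[C]_n, 0 <= (adjmx v *m A *m v) 0 0.

Definition density n (A : 'M[C]_n) : Prop := psdmx A /\ \tr A = 1.

(* computational basis vector |i j> of C^d (x) C^d; the product index of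
   (i,j) is i*d + j (mxtens_index), consistent with the Kronecker product *t *)
Definition ket2 d (i j : 'I_d) : 'cV[C]_(d * d) :=
  \col_k (k == mxtens_index (i, j))%:R.

Definition Dket d (i j : 'I_d) : 'cV[C]_(d * d) :=
  if i == j then ket2 i i
  else toC (Num.sqrt 2)^-1 *: (ket2 i j + ket2 j i).

(* weights p_ij (i <= j) of a DS state, extended symmetrically p_ji = p_ij *)
Definition DS_weights d (p : 'I_d -> 'I_d -> R) : Prop :=
  (forall i j, 0 <= p i j) /\ (forall i j, p i j = p j i) /\
  \sum_(i < d) \sum_(j < d | (i <= j)%N) p i j = 1.

Definition DS_state d (p : 'I_d -> 'I_d -> R) : 'M[C]_(d * d) :=
  \sum_(i < d) \sum_(j < d | (i <= j)%N)
     toC (p i j) *: (Dket i j *m adjmx (Dket i j)).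

Definition assoc_mx d (p : 'I_d -> 'I_d -> R) : 'M[R]_d :=
  \matrix_(i, j) (if i == j then p i i else p i j / 2).

Definition ptranspose2 d (A : 'M[C]_(d * d)) : 'M[C]_(d * d) :=
  \matrix_(r, c)
    A (mxtens_index ((mxtens_unindex r).1, (mxtens_unindex c).2))
      (mxtens_index ((mxtens_unindex c).1, (mxtens_unindex r).2)).

Definition PPT d (A : 'M[C]_(d * d)) : Prop := psdmx (ptranspose2 A).

Definition separable d (A : 'M[C]_(d * d)) : Prop :=
  exists (m : nat) (w : 'I_m -> R) (Aa Bb : 'I_m -> 'M[C]_d),
    [/\ forall k, 0 <= w k, \sum_(k < m) w k = 1,
        forall k, density (Aa k) /\ density (Bb k) &
        A = \sum_(k < m) toC (w k) *: (Aa k *t Bb k)].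

Definition completely_positive d (A : 'M[R]_d) : Prop :=
  exists (k : nat) (B : 'M[R]_(d, k)), (forall i j, 0 <= B i j) /\ A = B *m B^T.

Definition is_MP_pinv d (A X : 'M[R]_d) : Prop :=
  [/\ A *m X *m A = A, X *m A *m X = X, (A *m X)^T = A *m X & (X *m A)^T = X *m A].

Definition norm1 d (x : 'I_d -> R) : R := \sum_(i < d) x i.
Definition uvec d (x : 'I_d -> R) : 'cV[R]_d := \col_i (x i / norm1 x).

End QuantumDefs.

(* Main.v *)
Require Import Defs.
From HB Require Import structures.
From mathcomp Require Import all_boot all_order all_algebra.
From mathcomp Require Import reals.
From mathcomp Require Import complex mxtens.
From mathcomp Require Import zify ring lra.
Import Order.TTheory GRing.Theory Num.Theory.
Local Open Scope ring_scope.
Set Implicit Arguments. Unset Strict Implicit. Unset Printing Implicit Defensive.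


Section Main.
Variable R : realType.
Local Notation C := (R[i]).
Local Notation toC := (@toC R).
Local Notation Dket := (Dket R).

Lemma sum4 (r : nat) : (r < 4)%N ->
  \sum_(t < 4) ('i%C ^+ r) ^+ t = (if r == 0%N then 4 else 0 : C).
Proof.
move=> hr.
have -> : \sum_(t < 4) ('i%C ^+ r) ^+ t = (1 + 'i%C ^+ r) * (1 + ('i%C ^+ r) ^+ 2) :> C.
  by rewrite !big_ord_recl big_ord0 /bump /=; ring.
have hi := sqr_i R.
case: r hr => [|[|[|[|r]]]] // _ /=.
- by rewrite expr0 expr1n; ring.
- by rewrite expr1 hi subrr mulr0.
- by rewrite hi subrr mul0r.
- by rewrite -exprM mulnC exprM hi -signr_odd /= expr1 subrr mulr0.
Qed.

Lemma i4 : ('i%C ^+ 4 : C) = 1.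
Proof. by rewrite (exprM _ 2 2) sqr_i expr2 mulN1r opprK. Qed.

Lemma conj_ipow k : conjc ('i%C ^+ k : C) = 'i%C ^+ (3 * k).
Proof.
rewrite rmorphXn exprM; congr (_ ^+ _).
rewrite exprS sqr_i mulrN1 /conjc; apply/eqP; rewrite eq_complex /= oppr0 !eqxx //.
Qed.

Lemma nat_delta d (F : 'I_d -> nat) a : (\sum_(x < d) (x == a) * F x)%N = F a.
Proof.
rewrite (bigD1 a) //= eqxx mul1n big1 ?addn0 // => x /negbTE ->; by rewrite mul0n.
Qed.

Lemma phase_sum d (i j m n : 'I_d) :
  \sum_(s : {ffun 'I_d -> 'I_4})
     ('i%C ^+ s i * 'i%C ^+ s j * conjc ('i%C ^+ s m) * conjc ('i%C ^+ s n) : C)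
  = if ((i == m) && (j == n)) || ((i == n) && (j == m)) then (4 ^ d)%:R else 0.
Proof.
pose e := fun x : 'I_d => ((x==i) + (x==j) + 3*(x==m) + 3*(x==n))%N.
transitivity (\sum_(s : {ffun 'I_d -> 'I_4}) \prod_(x < d) ('i%C ^+ e x) ^+ s x : C).
  apply: eq_bigr => s _; rewrite !conj_ipow -!exprD.
  rewrite (eq_bigr (fun x => 'i%C ^+ (e x * s x))); last by move=> x _; rewrite exprM.
  rewrite prodrXr; congr (_ ^+ _).
  rewrite (eq_bigr (fun x => (x==i) * s x + (x==j) * s x + (x==m) * (3 * s x) + (x==n) * (3 * s x))%N);
    last by move=> x _; rewrite /e; lia.
  by rewrite !big_split /= !nat_delta.
rewrite -(bigA_distr_bigA (fun x (t : 'I_4) => ('i%C ^+ e x) ^+ t)) /=.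
rewrite (eq_bigr (fun x => if (e x %% 4 == 0)%N then 4 else 0)); last first.
  move=> x _; rewrite {1}(divn_eq (e x) 4) exprD mulnC exprM i4 expr1n mul1r.
  exact: sum4 (ltn_pmod _ _).
have -> : (((i == m) && (j == n)) || ((i == n) && (j == m))) = [forall x, (e x %% 4 == 0)%N].
  apply/idP/forallP.
    move=> H x; rewrite /e; move: H; rewrite -!val_eqE /=; lia.
  move=> H; move: (H i) (H j); rewrite /e -!val_eqE /=; lia.
case: ifP => [/forallP H|].
  rewrite (eq_bigr (fun _ => 4)); last by move=> x _; rewrite (eqP (H x)).
  by rewrite prodr_const card_ord natrX.
move=> /negbT; rewrite negb_forall => /existsP [x /negbTE hx].
by rewrite (bigD1 x) //= hx mul0r.
Qed.
Lemma toCE (r : R) : toC r = (r%:C)%C. Proof. by []. Qed.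
Lemma toCM (r s : R) : toC (r * s) = toC r * toC s. Proof. by rewrite !toCE rmorphM. Qed.
Lemma toCD (r s : R) : toC (r + s) = toC r + toC s. Proof. by rewrite !toCE rmorphD. Qed.
Lemma toCn (n : nat) : toC n%:R = n%:R. Proof. by rewrite !toCE rmorph_nat. Qed.
Lemma toC0 : toC 0 = 0. Proof. by []. Qed.
Lemma toC1 : toC 1 = 1. Proof. by []. Qed.
Lemma toC_sum (I : Type) (r : seq I) (P : pred I) (F : I -> R) :
  toC (\sum_(k <- r | P k) F k) = \sum_(k <- r | P k) toC (F k).
Proof. by rewrite toCE rmorph_sum. Qed.
Lemma conj_toC (r : R) : conjc (toC r) = toC r.
Proof. by rewrite /conjc /toC oppr0. Qed.
Lemma toC_inj (r s : R) : toC r = toC s -> r = s. Proof. by case. Qed.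

Lemma idx_eq d (i j a b : 'I_d) :
  (mxtens_index (i, j) == mxtens_index (a, b)) = (i == a) && (j == b).
Proof. by rewrite (can_eq (@mxtens_indexK d d)) xpair_eqE. Qed.

Definition Dval d (a b i j : 'I_d) : R :=
  if a == b then ((i == a) && (j == a))%:R
  else (Num.sqrt 2)^-1 * (((i == a) && (j == b))%:R + ((i == b) && (j == a))%:R).

Lemma Dket_entry d (a b i j : 'I_d) :
  Dket a b (mxtens_index (i, j)) 0 = toC (Dval a b i j).
Proof.
rewrite /Dket /Dval; case: eqP => [->|_]; rewrite !mxE ?idx_eq ?toCn //.
by rewrite toCM toCD !toCn.
Qed.

Lemma DS_entry_sum d (p : 'I_d -> 'I_d -> R) r c :
  DS_state p r c = \sum_(a < d) \sum_(b < d | (a <= b)%N)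
     toC (p a b) * (Dket a b r 0 * conjc (Dket a b c 0)).
Proof.
rewrite /DS_state summxE; apply: eq_bigr => a _; rewrite summxE.
by apply: eq_bigr => b _; rewrite !mxE big_ord1 !mxE.
Qed.

Lemma Dzero d (a b i j : 'I_d) : (i <= j)%N -> (a <= b)%N -> ~~ ((a == i) && (b == j)) ->
  Dval a b i j = 0.
Proof.
move=> hij hab hn; rewrite /Dval; case: ifP => hab2.
  have -> : ((i == a) && (j == a)) = false.
    by move: hab2 hn; rewrite -!val_eqE /=; lia.
  by [].
have -> : ((i == a) && (j == b)) = false.
  by move: hab2 hn; rewrite -!val_eqE /=; lia.
have -> : ((i == b) && (j == a)) = false.
  by move: hab2 hn hij hab; rewrite -!val_eqE /=; lia.
by rewrite addr0 mulr0.
Qed.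

Definition cond d (i j m n : 'I_d) := ((i == m) && (j == n)) || ((i == n) && (j == m)).

Lemma DS_entry d (p : 'I_d -> 'I_d -> R) (i j m n : 'I_d) :
  (forall a b, p a b = p b a) ->
  DS_state p (mxtens_index (i, j)) (mxtens_index (m, n)) =
  toC (if cond i j m n then assoc_mx p i j else 0).
Proof.
move=> Hsym.
have Dsym : forall (a b k l : 'I_d), Dval a b k l = Dval a b l k.
  by move=> a b k l; rewrite /Dval; case: ifP => _; [rewrite andbC | rewrite addrC (andbC (l == a)) (andbC (l == b))].
wlog hij : i j / (i <= j)%N.
  move=> H; case: (leqP i j) => [|/ltnW] h; first exact: H.
  have -> : cond i j m n = cond j i m n by rewrite /cond orbC (andbC (j == m)) (andbC (j == n)).
  have -> : assoc_mx p i j = assoc_mx p j i.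
    by rewrite !mxE [j == i]eq_sym; case: eqP => [->|_] //; rewrite Hsym.
  rewrite -H // !DS_entry_sum; apply: eq_bigr => a _; apply: eq_bigr => b _.
  by rewrite !Dket_entry Dsym.
rewrite DS_entry_sum (bigD1 i) //= [X in _ + X]big1 ?addr0; last first.
  move=> a hai; apply: big1 => b hab.
  by rewrite Dket_entry Dzero ?mul0r ?mulr0 // negb_and hai.
rewrite (bigD1 j) //= [X in _ + X]big1 ?addr0; last first.
  move=> b /andP [hib hb]; by rewrite Dket_entry Dzero ?mul0r ?mulr0 // eqxx /= hb.
rewrite !Dket_entry conj_toC -!toCM; congr toC.
rewrite /Dval /cond mxE; case: eqP => [<-|/eqP nij].
  rewrite !eqxx mul1r [m == i]eq_sym [n == i]eq_sym (andbC (i == n)) orbb.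
  by case: ifP => _ /=; rewrite ?mulr1n ?mulr0n ?mulr1 ?mulr0.
rewrite !eqxx /= addr0 mulr1n mulr1.
have hs : (Num.sqrt 2)^-1 * (Num.sqrt 2)^-1 = 2^-1 :> R.
  by rewrite -invfM -expr2 sqr_sqrtr ?ler0n.
rewrite [_^-1 * (_^-1 * _)]mulrA hs [m == i]eq_sym [n == j]eq_sym [m == j]eq_sym [n == i]eq_sym (andbC (i == n)).
have : ~~ (((i == m) && (j == n)) && ((j == m) && (i == n))).
  by move: nij; rewrite -!val_eqE /=; lia.
case: ((i == m) && (j == n)); case: ((j == m) && (i == n)) => //= _;
  rewrite /= ?mulr1n ?mulr0n ?addr0 ?add0r ?mulr1 ?mulr0 //; lra.
Qed.

End Main.



Section P3.
Variable R : realType.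
Local Notation C := (R[i]).
Local Notation toC := (@toC R).

Lemma adj_entry m n (A : 'M[C]_(m, n)) i j : adjmx A i j = conjc (A j i).
Proof. by rewrite mxE. Qed.

Lemma rank1_entry n (a : 'cV[C]_n) i j : (a *m adjmx a) i j = a i 0 * conjc (a j 0).
Proof. by rewrite !mxE big_ord1 mxE. Qed.

Lemma psd_rank1 n (a : 'cV[C]_n) : psdmx (a *m adjmx a).
Proof.
split.
  apply/matrixP => i j; rewrite adj_entry !rank1_entry rmorphM /= conjcK mulrC //.
move=> v; rewrite !mulmxA -(mulmxA (adjmx v *m a)).
rewrite !mxE big_ord1.
have -> : (adjmx v *m a) 0 0 = conjc ((adjmx a *m v) 0 0).
  rewrite !mxE rmorph_sum; apply: eq_bigr => k _; rewrite !mxE rmorphM /= conjcK mulrC //.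
by rewrite mulrC mulcJ_ge0.
Qed.

Lemma psd_scale n (r : R) (A : 'M[C]_n) : 0 <= r -> psdmx A -> psdmx (toC r *: A).
Proof.
move=> hr [hA hpos]; split.
  apply/matrixP => i j; rewrite adj_entry !mxE rmorphM /=; congr (_ * _); first by rewrite /toC /= oppr0.
  by rewrite {1}hA adj_entry.
move=> v; rewrite -scalemxAr -scalemxAl mxE mulr_ge0 //.
by rewrite toCE ler0c.
Qed.


Lemma tr_rank1 n (a : 'cV[C]_n) : \tr (a *m adjmx a) = \sum_i a i 0 * conjc (a i 0).
Proof. by apply: eq_bigr => i _; rewrite rank1_entry. Qed.

Lemma density_delta n (i0 : 'I_n) : density (delta_mx i0 i0 : 'M[C]_n).
Proof.
have -> : (delta_mx i0 i0 : 'M[C]_n) = (delta_mx i0 0 : 'cV[C]_n) *m adjmx (delta_mx i0 0).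
  apply/matrixP => a b; rewrite rank1_entry !mxE eqxx !andbT.
  case: (a == i0); case: (b == i0); rewrite /= ?mulr1n ?mulr0n ?mul0r ?mul1r //; by rewrite oppr0.
split; first exact: psd_rank1.
rewrite tr_rank1 (bigD1 i0) //= big1 ?addr0.
  by rewrite !mxE !eqxx /= mulr1n mul1r oppr0.
by move=> a /negbTE ha; rewrite !mxE ha mul0r.
Qed.

End P3.



Section Sep.
Variable R : realType.
Local Notation C := (R[i]).
Local Notation toC := (@toC R).
Variables (d : nat) (K : finType) (v : K -> 'I_d -> R) (i0 : 'I_d).
Hypothesis hv : forall k a, 0 <= v k a.

Definition ttot k := \sum_a v k a.
Definition amp k (s : {ffun 'I_d -> 'I_4}) : 'cV[C]_d :=
  \col_a (toC (Num.sqrt (v k a)) * 'i%C ^+ s a).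
Definition Pm k s : 'M[C]_d :=
  if ttot k == 0 then delta_mx i0 i0 else toC (ttot k)^-1 *: (amp k s *m adjmx (amp k s)).
Definition wt k : R := ttot k ^+ 2 / (4 ^ d)%:R.

Lemma tt_ge0 k : 0 <= ttot k.
Proof. by apply: sumr_ge0 => a _; apply: hv. Qed.

Lemma tt0 k : ttot k = 0 -> forall a, v k a = 0.
Proof. by move=> h a; apply: (psumr_eq0P (fun a _ => hv k a) h). Qed.

Lemma amp_norm k s a : amp k s a 0 * conjc (amp k s a 0) = toC (v k a).
Proof.
rewrite mxE rmorphM /= conj_ipow.
have -> : Complex (Num.sqrt (v k a)) (- 0) = toC (Num.sqrt (v k a)) by rewrite /toC oppr0.
rewrite mulrACA -exprD.
have -> : (s a + 3 * s a = 4 * s a)%N by lia.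
by rewrite exprM i4 expr1n mulr1 -toCM -expr2 sqr_sqrtr.
Qed.

Lemma Pm_density k s : density (Pm k s).
Proof.
rewrite /Pm; case: eqP => [_|ht]; first exact: density_delta.
split; first by apply: psd_scale; [rewrite invr_ge0 tt_ge0 | exact: psd_rank1].
rewrite mxtraceZ tr_rank1 (eq_bigr _ (fun a _ => amp_norm k s a)) -toC_sum -toCM.
by rewrite mulVf //; apply/eqP.
Qed.

Lemma wt_sum : \sum_(ks : K * {ffun 'I_d -> 'I_4}) wt ks.1 = \sum_k ttot k ^+ 2.
Proof.
rewrite -(pair_bigA _ (fun k (s : {ffun 'I_d -> 'I_4}) => wt k)) /=.
apply: eq_bigr => k _; rewrite sumr_const card_ffun !card_ord /wt.
rewrite -[X in X = _]mulr_natr -mulrA mulVf ?mulr1 // pnatr_eq0 expn_eq0. by [].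
Qed.


Lemma conjcM (x y : C) : conjc (x * y) = conjc x * conjc y.
Proof. exact: rmorphM. Qed.

Lemma Pm_entry k s a b : ttot k != 0 ->
  Pm k s a b = toC (ttot k)^-1 * (amp k s a 0 * conjc (amp k s b 0)).
Proof. by move=> ht; rewrite /Pm (negbTE ht) mxE rank1_entry. Qed.

Lemma sqrt_sq (x : R) : 0 <= x -> Num.sqrt x * Num.sqrt x = x.
Proof. by move=> hx; rewrite -expr2 sqr_sqrtr. Qed.

Lemma per_k k (i j m n : 'I_d) :
  \sum_(s : {ffun 'I_d -> 'I_4}) toC (wt k) * (Pm k s i m * Pm k s j n) =
  toC (if cond i j m n then v k i * v k j else 0).
Proof.
case: (eqVneq (ttot k) 0) => ht.
  have h0 := tt0 ht.
  rewrite /wt ht expr2 !mul0r big1 => [|s _]; last by rewrite mul0r.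
  by rewrite !h0 mul0r; case: ifP.
pose c := toC (wt k * (ttot k)^-1 * (ttot k)^-1).
pose sq := fun a => Num.sqrt (v k a).
have E : forall s, toC (wt k) * (Pm k s i m * Pm k s j n) =
   c * toC (sq i * sq j * sq m * sq n) *
   ('i%C ^+ s i * 'i%C ^+ s j * conjc ('i%C ^+ s m) * conjc ('i%C ^+ s n)).
  move=> s; rewrite !Pm_entry // !mxE !conjcM !conj_toC /c /sq !toCM; ring.
rewrite (eq_bigr _ (fun s _ => E s)) -mulr_sumr phase_sum.
rewrite /cond; case: ifP => hc; last by rewrite mulr0.
rewrite -toCn -!toCM; congr toC.
have -> : sq i * sq j * sq m * sq n = v k i * v k j.
  case/orP: hc => /andP [/eqP <- /eqP <-].
    transitivity ((sq i * sq i) * (sq j * sq j)); first ring.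
    by rewrite /sq !sqrt_sq.
  transitivity ((sq i * sq i) * (sq j * sq j)); first ring.
  by rewrite /sq !sqrt_sq.
rewrite /wt; field.
by rewrite pnatr_eq0 expn_eq0 /= ht.
Qed.

End Sep.



Section Tot.
Variable R : realType.
Variables (d : nat) (p : 'I_d -> 'I_d -> R).

Lemma row_sum a : \sum_(b < d) assoc_mx p a b =
  p a a + \sum_(b < d | (a < b)%N) p a b / 2 + \sum_(b < d | (b < a)%N) p a b / 2.
Proof.
rewrite (bigD1 a) //= mxE eqxx -addrA; congr (_ + _).
rewrite (bigID (fun b : 'I_d => (a < b)%N)) /=; congr (_ + _).
  apply: eq_big => b; first by rewrite -val_eqE /=; apply/idP/idP; lia.
  by move=> /andP [hb _]; rewrite mxE eq_sym (negbTE hb).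
apply: eq_big => b; first by rewrite -val_eqE /=; apply/idP/idP; lia.
by move=> /andP [hb _]; rewrite mxE eq_sym (negbTE hb).
Qed.

Lemma M_total : DS_weights p -> \sum_(a < d) \sum_(b < d) assoc_mx p a b = 1.
Proof.
move=> [hp [hs h1]].
rewrite (eq_bigr _ (fun a _ => row_sum a)) !big_split /=.
have -> : \sum_(a < d) \sum_(b < d | (b < a)%N) p a b / 2 = \sum_(a < d) \sum_(b < d | (a < b)%N) p a b / 2.
  rewrite (eq_bigr (fun a : 'I_d => \sum_(b < d) (if (b < a)%N then p a b / 2 else 0))); last by move=> a _; rewrite big_mkcond.
  rewrite exchange_big; apply: eq_bigr => a _; rewrite [RHS]big_mkcond; apply: eq_bigr => b _.
  by rewrite hs.
rewrite -[RHS]h1.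
have -> : \sum_(a < d) \sum_(b < d | (a <= b)%N) p a b = \sum_(a < d) p a a + \sum_(a < d) \sum_(b < d | (a < b)%N) p a b.
  rewrite -big_split; apply: eq_bigr => a _; rewrite (bigD1 a) //=; congr (_ + _).
  by apply: eq_bigl => b; rewrite ltn_neqAle andbC eq_sym.
set S := \sum_(a < d) \sum_(b < d | (a < b)%N) p a b.
set T := \sum_(a < d) \sum_(b < d | (a < b)%N) p a b / 2.
have -> : T = S / 2 by rewrite /T /S mulr_suml; apply: eq_bigr => a _; rewrite mulr_suml.
lra.
Qed.
End Tot.



Section Fin.
Variable R : realType.
Local Notation C := (R[i]).
Local Notation toC := (@toC R).

Lemma sum_enum (V : nmodType) (T : finType) (F : T -> V) :
  \sum_(k < #|T|) F (enum_val k) = \sum_t F t.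
Proof. by rewrite -(big_enum_val (A := T)) /=. Qed.

Lemma sep_fin d (T : finType) (w : T -> R) (A B : T -> 'M[C]_d) X :
  (forall t, 0 <= w t) -> \sum_t w t = 1 -> (forall t, density (A t) /\ density (B t)) ->
  X = \sum_t toC (w t) *: (A t *t B t) -> separable X.
Proof.
move=> h0 h1 hd hX.
exists #|T|, (fun k => w (enum_val k)), (fun k => A (enum_val k)), (fun k => B (enum_val k)).
split => //.
  by rewrite (sum_enum (fun t => w t)).
by rewrite hX (sum_enum (fun t => toC (w t) *: (A t *t B t))).
Qed.

Lemma cp_fin d (K : finType) (v : K -> 'I_d -> R) (M : 'M[R]_d) :
  (forall k a, 0 <= v k a) -> (forall a b, M a b = \sum_k v k a * v k b) ->
  completely_positive M.
Proof.
move=> hv hM.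
exists #|K|, (\matrix_(a < d, k < #|K|) v (enum_val k) a); split.
  by move=> a k; rewrite mxE.
apply/matrixP => a b; rewrite hM mxE -(sum_enum (fun k => v k a * v k b)).
by apply: eq_bigr => k _; rewrite !mxE.
Qed.

End Fin.



Section DD.
Variable R : realType.
Variables (d : nat) (N : 'I_d -> 'I_d -> R).
Hypothesis Nsym : forall a b, N a b = N b a.

Definition rr a := N a a - \sum_(j < d | j != a) N a j.
Definition WW i j := if i == j then rr i / 4 else N i j / 2.
Local Notation dl a i := ((a == i)%:R : R).

Lemma sum_delta (F : 'I_d -> R) a : \sum_i dl a i * F i = F a.
Proof.
rewrite (bigD1 a) //= eqxx mul1r big1 ?addr0 // => i hi.
by rewrite eq_sym (negbTE hi) mul0r.
Qed.

Lemma WWsym i j : WW i j = WW j i.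
Proof. by rewrite /WW eq_sym; case: eqP => [->|] //; rewrite Nsym. Qed.

Lemma dd_decomp a b : N a b =
  \sum_i \sum_j WW i j * ((dl a i + dl a j) * (dl b i + dl b j)).
Proof.
pose f1 := fun i j => WW i j * dl a i * dl b i.
pose f2 := fun i j => WW i j * dl a i * dl b j.
pose f3 := fun i j => WW i j * dl a j * dl b i.
pose f4 := fun i j => WW i j * dl a j * dl b j.
rewrite (eq_bigr (fun i => \sum_j f1 i j + \sum_j f2 i j + \sum_j f3 i j + \sum_j f4 i j)); last first.
  by move=> i _; rewrite -!big_split; apply: eq_bigr => j _ /=; rewrite /f1 /f2 /f3 /f4; ring.
rewrite !big_split /=.
have -> : \sum_i \sum_j f1 i j = dl a b * \sum_j WW a j.
  rewrite (eq_bigr (fun i => dl a i * (dl b i * \sum_j WW i j))); last first.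
    by move=> i _; rewrite !mulr_sumr; apply: eq_bigr => j _; rewrite /f1; ring.
  by rewrite sum_delta eq_sym.
have -> : \sum_i \sum_j f2 i j = WW a b.
  rewrite (eq_bigr (fun i => dl a i * \sum_j dl b j * WW i j)); last first.
    by move=> i _; rewrite !mulr_sumr; apply: eq_bigr => j _; rewrite /f2; ring.
  by rewrite sum_delta sum_delta.
have -> : \sum_i \sum_j f3 i j = WW b a.
  rewrite exchange_big (eq_bigr (fun j => dl a j * \sum_i dl b i * WW i j)); last first.
    by move=> j _; rewrite !mulr_sumr; apply: eq_bigr => i _; rewrite /f3; ring.
  by rewrite sum_delta sum_delta.
have -> : \sum_i \sum_j f4 i j = dl a b * \sum_j WW a j.
  rewrite exchange_big (eq_bigr (fun j => dl a j * (dl b j * \sum_i WW j i))); last first.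
    by move=> j _; rewrite !mulr_sumr; apply: eq_bigr => i _; rewrite /f4 (WWsym i j); ring.
  by rewrite sum_delta eq_sym.
have hW : \sum_j WW a j = rr a / 4 + (\sum_(j < d | j != a) N a j) / 2.
  rewrite (bigD1 a) //= /WW eqxx mulr_suml; congr (_ + _).
  by apply: eq_bigr => j hj; rewrite eq_sym (negbTE hj).
rewrite hW (WWsym b a) /WW; case: eqP => [<-|/eqP hab].
  rewrite /rr /= mul1r; lra.
rewrite /= !mul0r; lra.
Qed.
End DD.



Section Fam.
Variable R : realType.
Local Notation C := (R[i]).
Local Notation toC := (@toC R).

Lemma sum_sq d (K : finType) (v : K -> 'I_d -> R) (M : 'M[R]_d) :
  (forall a b, M a b = \sum_k v k a * v k b) ->
  \sum_k ttot v k ^+ 2 = \sum_(a < d) \sum_(b < d) M a b.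
Proof.
move=> hM.
rewrite (eq_bigr (fun k => \sum_(a < d) \sum_(b < d) v k a * v k b)); last first.
  by move=> k _; rewrite expr2 /ttot mulr_suml; apply: eq_bigr => a _; rewrite mulr_sumr.
rewrite exchange_big; apply: eq_bigr => a _; rewrite exchange_big; apply: eq_bigr => b _.
by rewrite hM.
Qed.

Lemma DS_decomp d (p : 'I_d -> 'I_d -> R) (K : finType) (v : K -> 'I_d -> R) (i0 : 'I_d)
  (hv : forall k a, 0 <= v k a) :
  (forall a b, p a b = p b a) ->
  (forall a b, assoc_mx p a b = \sum_k v k a * v k b) ->
  DS_state p = \sum_(ks : K * {ffun 'I_d -> 'I_4})
     toC (wt v ks.1) *: (Pm v i0 ks.1 ks.2 *t Pm v i0 ks.1 ks.2).
Proof.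
move=> Hsym hM.
apply/matrixP => r c; rewrite -(mxtens_unindexK r) -(mxtens_unindexK c).
case: (mxtens_unindex r) => i j; case: (mxtens_unindex c) => m n.
rewrite DS_entry // summxE.
rewrite (eq_bigr (fun ks : K * {ffun 'I_d -> 'I_4} =>
  toC (wt v ks.1) * (Pm v i0 ks.1 ks.2 i m * Pm v i0 ks.1 ks.2 j n))); last first.
  by move=> ks _; rewrite mxE tensmxE.
rewrite -(pair_bigA _ (fun k s => toC (wt v k) * (Pm v i0 k s i m * Pm v i0 k s j n))) /=.
rewrite (eq_bigr _ (fun k _ => per_k i0 hv k i j m n)) -toC_sum; congr toC.
by case: ifP => _; [rewrite hM | rewrite big1].
Qed.

Lemma M_family d (M : 'M[R]_d) (x : 'I_d -> R) (lam : R) (i0 : 'I_d) :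
  (forall a b, M a b = M b a) -> (forall i, 0 < x i) -> 0 <= lam ->
  (forall i j, lam <= M i j * norm1 x ^+ 2 / (x i * x j)) ->
  (forall i, norm1 x ^+ 2 * (\sum_(j < d | j != i) M i j - M i i)
             <= lam * x i * (norm1 x - 2 * x i)) ->
  exists K : finType, exists v : K -> 'I_d -> R,
    (forall k a, 0 <= v k a) /\ (forall a b, M a b = \sum_k v k a * v k b).
Proof.
move=> Msym hx hl c1 c3.
set s := norm1 x.
have sX : forall i, \sum_(j < d | j != i) x j = s - x i.
  by move=> i; rewrite /s /norm1 [in RHS](bigD1 i) //= addrC addrK.
have hs : 0 < s.
  have := sX i0; have : 0 <= \sum_(j < d | j != i0) x j.
    by apply: sumr_ge0 => j _; apply: ltW.
  have := hx i0; lra.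
have s0 : s != 0 by rewrite gt_eqF.
pose u a := x a / s.
pose N a b := M a b - lam * u a * u b.
have Nsym : forall a b, N a b = N b a by move=> a b; rewrite /N Msym; ring.
have hN : forall i j, 0 <= N i j.
  move=> i j; have hxi := hx i; have hxj := hx j.
  have q0 : 0 <= x i * x j / s ^+ 2 by apply: divr_ge0; [apply: mulr_ge0; apply: ltW | apply: sqr_ge0].
  have := ler_wpM2r q0 (c1 i j).
  have -> : M i j * s ^+ 2 / (x i * x j) * (x i * x j / s ^+ 2) = M i j.
    by field; rewrite s0 !gt_eqF.
  rewrite /N /u subr_ge0.
  have -> : lam * (x i / s) * (x j / s) = lam * (x i * x j / s ^+ 2) by field.
  by [].
have hr : forall i, 0 <= rr N i.
  move=> i; have hxi := hx i.
  have -> : rr N i = (lam * x i * (s - 2 * x i) - s ^+ 2 * (\sum_(j < d | j != i) M i j - M i i)) / s ^+ 2.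
    rewrite /rr /N sumrB -mulr_sumr.
    have -> : \sum_(j < d | j != i) u j = (s - x i) / s by rewrite -sX mulr_suml.
    by rewrite /u; field.
  by apply: divr_ge0; [rewrite subr_ge0 c3 | apply: sqr_ge0].
have hW : forall i j, 0 <= WW N i j.
  by move=> i j; rewrite /WW; case: ifP => _; apply: divr_ge0.
exists ('I_1 + 'I_d * 'I_d)%type.
exists (fun k => match k with
  | inl _ => fun c => Num.sqrt lam * u c
  | inr pq => fun c => Num.sqrt (WW N pq.1 pq.2) * ((c == pq.1)%:R + (c == pq.2)%:R) end).
split.
  case => [_|pq] c /=; apply: mulr_ge0; rewrite ?sqrtr_ge0 //.
    by apply: divr_ge0; apply: ltW.
  by apply: addr_ge0; apply: ler0n.
move=> a b; rewrite big_sumType /= big_ord1.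
rewrite -(pair_bigA _ (fun i j => Num.sqrt (WW N i j) * ((a == i)%:R + (a == j)%:R) *
          (Num.sqrt (WW N i j) * ((b == i)%:R + (b == j)%:R)))) /=.
have -> : M a b = lam * u a * u b + N a b by rewrite /N; ring.
rewrite (dd_decomp Nsym a b); congr (_ + _).
  by rewrite [RHS]mulrACA sqrt_sq // /u; ring.
apply: eq_bigr => i _; apply: eq_bigr => j _.
by rewrite mulrACA sqrt_sq.
Qed.

End Fam.

Theorem theorem6 (R : realType) (d : nat) (p : 'I_d -> 'I_d -> R)
    (x : 'I_d -> R) (Mplus : 'M[R]_d) (lam : R) :
  (2 <= d)%N ->
  DS_weights p ->
  PPT (DS_state p) ->
  (forall i, 0 < x i) ->
  is_MP_pinv (assoc_mx p) Mplus ->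
  0 <= lam < 1 ->
  (forall i j, lam <= assoc_mx p i j * norm1 x ^+ 2 / (x i * x j)) ->
  (exists y : 'cV[R]_d, assoc_mx p *m y = uvec x) ->
  lam <= (((uvec x)^T *m Mplus *m uvec x) 0 0)^-1 ->
  (forall i, norm1 x ^+ 2 * (\sum_(j < d | j != i) assoc_mx p i j - assoc_mx p i i)
             <= lam * x i * (norm1 x - 2 * x i)) ->
  separable (DS_state p) /\ completely_positive (assoc_mx p).
Proof.
move=> hd hW _ hx _ /andP [hl0 _] c1 _ _ c3.
have i0 : 'I_d := Ordinal (leq_trans (isT : (0 < 2)%N) hd).
have [hp [hsym h1]] := hW.
have Msym : forall a b, assoc_mx p a b = assoc_mx p b a.
  by move=> a b; rewrite !mxE eq_sym; case: eqP => [->|_] //; rewrite hsym.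
have [K [v [hv hM]]] := M_family i0 Msym hx hl0 c1 c3.
split; last exact: cp_fin hv hM.
apply: (sep_fin (w := fun ks : K * {ffun 'I_d -> 'I_4} => wt v ks.1)
                (A := fun ks => Pm v i0 ks.1 ks.2) (B := fun ks => Pm v i0 ks.1 ks.2)).
- move=> ks; apply: divr_ge0; [apply: exprn_ge0; exact: tt_ge0 | exact: ler0n].
- by rewrite wt_sum (sum_sq hM) M_total.
- by move=> ks; split; apply: Pm_density.
- exact: DS_decomp.
Qed.
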